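(* Let $L$ be an $S$-Noetherian lattice, where $S$ is a multiplicatively closed subset of $L$ with $1\in S$, $0\notin S$. Then every $S$-irreducible element of $L$ is $S$-primary.
   Context: A multiplicative lattice is a complete lattice with a commutative, associative multiplication distributing over arbitrary joins, with $1$ as identity; $L_*$ is the set of compact elements; $(a:b)=\bigvee\{x\mid xb\le a\}$. An element $m$ is meet principal if $a\wedge mb=m((a:m)\wedge b)$ for all $a,b$, join principal if $a\vee(b:m)=(am\vee b):m$ for all $a,b$, and principal if both. An $r$-lattice is a modular, principally generated, compactly generated multiplicative lattice with $1$ compact. A multiplicatively closed subset is a nonempty $S\subseteq L_*$ closed under multiplication. An element $a$ is $S$-compact if $sa\le b\le a$ for some compact $b$ and some $s\in S$; an $S$-Noetherian lattice is an $r$-lattice in which every element is $S$-compact. $\sqrt a=\bigvee\{x\in L_*\mid x^n\le a\text{ for some }n\in\mathbb{Z}^+\}$. An element $q$ with $t\not\le q$ for all $t\in S$ is $S$-irreducible if whenever $s(a\wedge b)\le q\le a\wedge b$ for some $s\in S$ and $a,b\in L$, there exists $s'\in S$ with $ss'a\le q$ or $ss'b\le q$. A proper element $q$ with $t\not\le q$ for all $t\in S$ is $S$-primary if there exists $s\in S$ such that for all $c,d\in L$, $cd\le q$ implies $sc\le q$ or $sd\le\sqrt q$. *)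

(* Defs.v *)
From Stdlib Require Import List Arith.

Record MultLattice := {
  car :> Type;
  le : car -> car -> Prop;
  sup : (car -> Prop) -> car;
  mul : car -> car -> car;
  one : car;
  le_refl : forall a, le a a;
  le_trans : forall a b c, le a b -> le b c -> le a c;
  le_antisym : forall a b, le a b -> le b a -> a = b;
  sup_ub : forall (A : car -> Prop) a, A a -> le a (sup A);
  sup_least : forall (A : car -> Prop) b, (forall a, A a -> le a b) -> le (sup A) b;
  mul_comm : forall a b, mul a b = mul b a;
  mul_assoc : forall a b c, mul a (mul b c) = mul (mul a b) c;
  mul_sup : forall a (A : car -> Prop),
      mul a (sup A) = sup (fun x => exists y, A y /\ x = mul a y);
  one_mul : forall a, mul one a = a;
  one_top : forall a, le a one
}.

Section Defs.
Variable L : MultLattice.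

Definition bot : L := sup L (fun _ => False).
Definition join (a b : L) : L := sup L (fun x => x = a \/ x = b).
Definition meet (a b : L) : L := sup L (fun x => le L x a /\ le L x b).
Definition colon (a b : L) : L := sup L (fun x => le L (mul L x b) a).

Fixpoint pw (x : L) (n : nat) : L :=
  match n with 0 => one L | S k => mul L x (pw x k) end.

Definition compact (c : L) : Prop :=
  forall A : L -> Prop, le L c (sup L A) ->
    exists l : list L, (forall x, In x l -> A x) /\ le L c (sup L (fun x => In x l)).

Definition meet_principal (m : L) : Prop :=
  forall a b, meet a (mul L m b) = mul L m (meet (colon a m) b).
Definition join_principal (m : L) : Prop :=
  forall a b, join a (colon b m) = colon (join (mul L a m) b) m.
Definition principal (m : L) : Prop := meet_principal m /\ join_principal m.

Definition modular : Prop :=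
  forall a b c, le L a c -> join a (meet b c) = meet (join a b) c.
Definition principally_generated : Prop :=
  forall a, a = sup L (fun x => principal x /\ le L x a).
Definition compactly_generated : Prop :=
  forall a, a = sup L (fun x => compact x /\ le L x a).

Definition r_lattice : Prop :=
  modular /\ principally_generated /\ compactly_generated /\ compact (one L).

Definition mult_closed (S : L -> Prop) : Prop :=
  (exists s, S s) /\ (forall s, S s -> compact s) /\
  (forall s t, S s -> S t -> S (mul L s t)).

Definition S_compact (S : L -> Prop) (a : L) : Prop :=
  exists s b, S s /\ compact b /\ le L (mul L s a) b /\ le L b a.

Definition S_noetherian (S : L -> Prop) : Prop :=
  r_lattice /\ forall a, S_compact S a.

Definition rad (a : L) : L :=
  sup L (fun x => compact x /\ exists n, 0 < n /\ le L (pw x n) a).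

Definition S_irreducible (S : L -> Prop) (q : L) : Prop :=
  (forall t, S t -> ~ le L t q) /\
  forall s a b, S s -> le L (mul L s (meet a b)) q -> le L q (meet a b) ->
    exists s', S s' /\ (le L (mul L (mul L s s') a) q \/ le L (mul L (mul L s s') b) q).

Definition S_primary (S : L -> Prop) (q : L) : Prop :=
  q <> one L /\ (forall t, S t -> ~ le L t q) /\
  exists s, S s /\ forall c d, le L (mul L c d) q ->
    le L (mul L s c) q \/ le L (mul L s d) (rad q).

End Defs.

(* Main.v *)
Require Import Defs.
From Stdlib Require Import List Arith.
From Stdlib Require Import Classical Lia.

Lemma mul_one (L : MultLattice) (a : L) : mul L a (one L) = a.
Proof. rewrite mul_comm. apply one_mul. Qed.

Lemma join_ub1 (L : MultLattice) (a b : L) : le L a (join L a b).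
Proof. unfold join; apply sup_ub; auto. Qed.
Lemma join_ub2 (L : MultLattice) (a b : L) : le L b (join L a b).
Proof. unfold join; apply sup_ub; auto. Qed.
Lemma join_least (L : MultLattice) (a b c : L) :
  le L a c -> le L b c -> le L (join L a b) c.
Proof. intros; unfold join; apply sup_least; intros x [-> | ->]; auto. Qed.
Lemma meet_lb1 (L : MultLattice) (a b : L) : le L (meet L a b) a.
Proof. unfold meet; apply sup_least; intros x [H _]; auto. Qed.
Lemma meet_lb2 (L : MultLattice) (a b : L) : le L (meet L a b) b.
Proof. unfold meet; apply sup_least; intros x [_ H]; auto. Qed.
Lemma meet_greatest (L : MultLattice) (a b c : L) :
  le L c a -> le L c b -> le L c (meet L a b).
Proof. intros; unfold meet; apply sup_ub; auto. Qed.
Lemma le_eq (L : MultLattice) (a b : L) :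
  (forall x, le L x a <-> le L x b) -> a = b.
Proof. intros H; apply le_antisym; apply H; apply le_refl. Qed.
Lemma meet_comm (L : MultLattice) (a b : L) : meet L a b = meet L b a.
Proof.
  apply le_eq; intro x; split; intro H; apply meet_greatest;
  eapply le_trans; eauto using meet_lb1, meet_lb2.
Qed.
Lemma mul_mono_r (L : MultLattice) (c a b : L) :
  le L a b -> le L (mul L c a) (mul L c b).
Proof.
  intros H.
  assert (E : b = join L a b) by
    (apply le_antisym; [apply join_ub2 | apply join_least; auto; apply le_refl]).
  rewrite E. unfold join. rewrite mul_sup. apply sup_ub. exists a; auto.
Qed.
Lemma mul_mono_l (L : MultLattice) (c a b : L) :
  le L a b -> le L (mul L a c) (mul L b c).
Proof. intros; rewrite !(mul_comm L _ c); apply mul_mono_r; auto. Qed.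
Lemma mul_mono (L : MultLattice) (a b c d : L) :
  le L a b -> le L c d -> le L (mul L a c) (mul L b d).
Proof. intros; eapply le_trans; [apply mul_mono_l; eauto | apply mul_mono_r; auto]. Qed.
Lemma mul_le_l (L : MultLattice) (a b : L) : le L (mul L a b) a.
Proof.
  eapply le_trans; [apply mul_mono_r, one_top | rewrite mul_one; apply le_refl].
Qed.
Lemma mul_le_r (L : MultLattice) (a b : L) : le L (mul L a b) b.
Proof. rewrite mul_comm; apply mul_le_l. Qed.
Lemma colon_spec (L : MultLattice) (a b x : L) :
  le L x (colon L a b) <-> le L (mul L x b) a.
Proof.
  split.
  - intro H. eapply le_trans. apply mul_mono_l, H. unfold colon.
    rewrite mul_comm, mul_sup. apply sup_least. intros z [y [Hy ->]].
    rewrite mul_comm; auto.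
  - intro; unfold colon; apply sup_ub; auto.
Qed.
Lemma mul_join_le (L : MultLattice) (s a b c : L) :
  le L (mul L s a) c -> le L (mul L s b) c -> le L (mul L s (join L a b)) c.
Proof.
  intros; unfold join; rewrite mul_sup; apply sup_least;
  intros z [y [[-> | ->] ->]]; auto.
Qed.
Lemma colon_colon (L : MultLattice) (a m n : L) :
  colon L (colon L a m) n = colon L a (mul L m n).
Proof.
  apply le_eq; intro x; rewrite !colon_spec.
  rewrite (mul_comm L m n), mul_assoc. tauto.
Qed.
Lemma mp_one (L : MultLattice) : meet_principal L (one L).
Proof.
  intros a b. rewrite !one_mul. f_equal.
  apply le_eq; intro x; rewrite colon_spec, mul_one; tauto.
Qed.
Lemma mp_mul (L : MultLattice) (m n : L) :
  meet_principal L m -> meet_principal L n -> meet_principal L (mul L m n).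
Proof.
  intros Hm Hn a b. rewrite <- mul_assoc, Hm, Hn, mul_assoc, colon_colon.
  reflexivity.
Qed.
Lemma pw_mp (L : MultLattice) (d : L) k : principal L d -> meet_principal L (pw L d k).
Proof.
  intro H; induction k; simpl; [apply mp_one | apply mp_mul; [apply H | auto]].
Qed.
Lemma pw_add (L : MultLattice) (d : L) m n : pw L d (m + n) = mul L (pw L d m) (pw L d n).
Proof.
  induction m; simpl; [rewrite one_mul | rewrite IHm, mul_assoc]; auto.
Qed.
Lemma pw_le (L : MultLattice) (d : L) m n : m <= n -> le L (pw L d n) (pw L d m).
Proof.
  intro; replace n with (m + (n - m)) by lia; rewrite pw_add; apply mul_le_l.
Qed.
Lemma pw_le_base (L : MultLattice) (d : L) n : 0 < n -> le L (pw L d n) d.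
Proof. intros; destruct n; [lia | simpl; apply mul_le_l]. Qed.
Lemma pw_mono (L : MultLattice) (a b : L) n : le L a b -> le L (pw L a n) (pw L b n).
Proof. intro; induction n; simpl; [apply le_refl | apply mul_mono; auto]. Qed.
Lemma pw_mul (L : MultLattice) (a b : L) n :
  pw L (mul L a b) n = mul L (pw L a n) (pw L b n).
Proof.
  induction n; simpl.
  - rewrite one_mul; auto.
  - rewrite IHn. rewrite <- !mul_assoc. f_equal.
    rewrite !mul_assoc, (mul_comm L b (pw L a n)). reflexivity.
Qed.
Lemma colon_anti (L : MultLattice) (a b b' : L) :
  le L b' b -> le L (colon L a b) (colon L a b').
Proof.
  intro; apply colon_spec. eapply le_trans; [apply mul_mono_r; eauto |].
  apply colon_spec, le_refl.
Qed.

Lemma compact_directed (L : MultLattice) {I : Type} (P : I -> Prop) (F : I -> L)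
  (i0 : I) (b : L) :
  P i0 ->
  (forall i j, P i -> P j -> exists k, P k /\ le L (F i) (F k) /\ le L (F j) (F k)) ->
  compact L b -> le L b (sup L (fun x => exists i, P i /\ x = F i)) ->
  exists k, P k /\ le L b (F k).
Proof.
  intros H0 Hd Hc Hb. destruct (Hc _ Hb) as [l [Hl Hle]].
  assert (exists k, P k /\ forall x, In x l -> le L x (F k)) as [k [Pk Hk]].
  { clear Hle. induction l as [|y l IH].
    - exists i0; split; auto; intros x [].
    - destruct IH as [k [Pk Hk]]. { intros; apply Hl; right; auto. }
      destruct (Hl y (or_introl eq_refl)) as [j [Pj ->]].
      destruct (Hd k j Pk Pj) as [m [Pm [H1 H2]]]. exists m; split; auto.
      intros x [<- | Hx]; auto. eapply le_trans; eauto. }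
  exists k; split; auto. eapply le_trans; [exact Hle | apply sup_least; auto].
Qed.

Theorem mainTheorem6 (L : MultLattice) (S : L -> Prop) :
  mult_closed L S -> S (one L) -> ~ S (bot L) ->
  S_noetherian L S ->
  forall q : L, S_irreducible L S q -> S_primary L S q.
Proof.
  intros Hmc HS1 HS0 [[Hmod [Hpg [Hcg Hc1]]] HSc] q [Hq0 Hirr].
  destruct Hmc as [_ [HScomp HSmul]].
  assert (Hu : exists u, S u /\ forall t x, S t -> le L (mul L x t) q -> le L (mul L u x) q).
  { destruct (HSc (sup L (fun x => exists t, S t /\ x = colon L q t)))
      as [t0 [b [Ht0 [Hb [H1 H2]]]]].
    destruct (compact_directed L S (fun t => colon L q t) (one L) b HS1)
      as [T [HT HbT]]; auto.
    { intros i j Pi Pj. exists (mul L i j). split; auto.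
      split; apply colon_anti; [apply mul_le_l | apply mul_le_r]. }
    exists (mul L t0 T). split; auto. intros t x Ht Hx.
    assert (H : le L (mul L t0 x) (colon L q T)).
    { eapply le_trans; [| exact HbT]. eapply le_trans; [| exact H1].
      apply mul_mono_r. eapply le_trans; [apply colon_spec; exact Hx |].
      apply sup_ub. exists t; split; auto. }
    apply (proj1 (colon_spec L q T _)) in H.
    rewrite <- mul_assoc, (mul_comm L T x), mul_assoc; exact H. }
  destruct Hu as [u [Hu HuP]].
  assert (Hmain : forall c d, principal L d -> le L (mul L c d) q ->
             le L (mul L u c) q \/ le L (mul L u d) (rad L q)).
  { intros c d Hd Hcd.
    destruct (HSc (sup L (fun x => exists n : nat, True /\ x = colon L q (pw L d n))))
      as [s [b [Hs [Hb [H1 H2]]]]].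
    destruct (compact_directed L (fun _ : nat => True) (fun n => colon L q (pw L d n)) 0 b I)
      as [k [_ Hk]]; auto.
    { intros i j _ _. exists (max i j). split; auto; split; apply colon_anti, pw_le; lia. }
    assert (HK : forall n, le L (mul L s (colon L q (pw L d n))) (colon L q (pw L d (k + 1)))).
    { intro n. apply le_trans with (colon L q (pw L d k)); [| apply colon_anti, pw_le; lia].
      eapply le_trans; [| eapply le_trans; [exact H1 | exact Hk]].
      apply mul_mono_r; apply sup_ub; exists n; split; [exact I | reflexivity]. }
    assert (HqC : le L q (colon L q (pw L d (k + 1)))) by (apply colon_spec; apply mul_le_l).
    assert (HCD : le L (mul L (colon L q (pw L d (k + 1))) (pw L d (k + 1))) q)
      by (apply colon_spec, le_refl).
    assert (Hmeet : le L (mul L s (meet L (pw L d (k + 1)) (colon L q (pw L d (k + 1))))) q).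
    { rewrite meet_comm.
      pose proof (pw_mp L d (k + 1) Hd (colon L q (pw L d (k + 1))) (one L)) as E.
      rewrite mul_one in E. rewrite E.
      rewrite mul_assoc, (mul_comm L s (pw L d (k + 1))), <- mul_assoc.
      eapply le_trans; [apply mul_mono_r | rewrite mul_comm; exact HCD].
      eapply le_trans; [apply mul_mono_r, meet_lb1 |].
      rewrite colon_colon, <- pw_add. apply HK. }
    assert (Hirr1 : le L (mul L s (meet L (join L q (pw L d (k + 1)))
                                       (colon L q (pw L d (k + 1))))) q).
    { rewrite <- Hmod by auto. apply mul_join_le; auto. apply mul_le_r. }
    assert (Hirr2 : le L q (meet L (join L q (pw L d (k + 1))) (colon L q (pw L d (k + 1))))).
    { apply meet_greatest; auto. apply join_ub1. }
    destruct (Hirr s _ _ Hs Hirr1 Hirr2) as [s' [Hs' [HA | HB]]].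
    - right.
      assert (HD : le L (mul L u (pw L d (k + 1))) q).
      { apply (HuP (mul L s s')); auto. rewrite mul_comm.
        eapply le_trans; [apply mul_mono_r, join_ub2 | exact HA]. }
      unfold rad. rewrite (Hcg (mul L u d)). apply sup_least.
      intros x [Hx Hxle]. apply sup_ub. split; auto. exists (k + 1). split; [lia |].
      eapply le_trans; [apply pw_mono; exact Hxle |]. rewrite pw_mul.
      eapply le_trans; [apply mul_mono_l, pw_le_base; lia | exact HD].
    - left. apply (HuP (mul L s s')); auto.
      assert (Hc : le L c (colon L q (pw L d (k + 1)))).
      { apply colon_spec. eapply le_trans; [apply mul_mono_r, pw_le_base; lia | exact Hcd]. }
      rewrite mul_comm. eapply le_trans; [apply mul_mono_r, Hc | exact HB]. }
  split.
  { intro Heq. apply (Hq0 (one L) HS1). rewrite Heq; apply le_refl. }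
  split; auto. exists u; split; auto. intros c d Hcd.
  destruct (classic (le L (mul L u c) q)) as [Hc | Hc]; [left; auto | right].
  rewrite (Hpg d). rewrite mul_sup. apply sup_least.
  intros z [y [[Hy Hyd] ->]].
  destruct (Hmain c y Hy) as [H | H]; auto.
  - eapply le_trans; [apply mul_mono_r, Hyd | exact Hcd].
  - contradiction.
Qed.
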